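(* For all $x,y\in\mathcal{X}$ and $N\in\mathbb{N}^+$, $$\tilde\alpha_N(x,y)\le\alpha(x,y)\,\mathbb{E}_{Q_{x,N}}\left[W_{x,N}^{-1}\right].$$
   Context: Let $(\mathcal{X},\mathcal{B}(\mathcal{X}))$ be a measurable space, $\pi$ a probability distribution on it with density $\pi(x)$ with respect to a reference measure, and $q$ a Markov proposal kernel. For each $x\in\mathcal{X}$, $N\in\mathbb{N}^+$, $Q_{x,N}$ is a probability distribution on $[0,\infty)$ such that $W_{x,N}\sim Q_{x,N}$ satisfies $W_{x,N}>0$ a.s. and $\mathbb{E}[W_{x,N}]=1$. Define $\alpha(x,y)=\min\{1,\frac{\pi(dy)q(y,dx)}{\pi(dx)q(x,dy)}\}$ and $\tilde\alpha_N(x,y)=\mathbb{E}[\min\{1,\frac{\pi(dy)q(y,dx)}{\pi(dx)q(x,dy)}\frac{W_{y,N}}{W_{x,N}}\}]$ with $W_{x,N}\sim Q_{x,N}$ and $W_{y,N}\sim Q_{y,N}$ independent. *)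

(* Defs.v *)
From HB Require Import structures.
From mathcomp Require Import all_boot all_order all_algebra.
From mathcomp Require Import all_classical all_reals all_analysis.
Set Implicit Arguments. Unset Strict Implicit. Unset Printing Implicit Defensive.
Import Order.TTheory GRing.Theory Num.Theory.
Local Open Scope ring_scope.
Local Open Scope classical_set_scope.
Local Open Scope ereal_scope.

(* [ratio x y] stands for the Radon-Nikodym ratio
   pi(dy) q(y,dx) / (pi(dx) q(x,dy)) (a nonnegative real). *)

Definition mh_alpha {X : Type} {R : realType} (ratio : X -> X -> R) (x y : X) : R :=
  Num.min 1%R (ratio x y).

(* alpha~_N(x,y) = E[min{1, ratio x y * W_y / W_x}] with W_x ~ Q x N, W_y ~ Q y N
   independent: expectation under the product measure (Q x N) \x (Q y N) on R * R,
   first component W_x, second component W_y. *)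
Definition pm_alpha {X : Type} {R : realType} (ratio : X -> X -> R)
  (Q : X -> nat -> probability R R) (N : nat) (x y : X) : \bar R :=
  \int[(Q x N \x Q y N)]_(w in [set: R * R])
     (Num.min 1%R (ratio x y * w.2 / w.1))%:E.

Definition inv_moment {X : Type} {R : realType}
  (Q : X -> nat -> probability R R) (N : nat) (x : X) : \bar R :=
  \int[Q x N]_(w in [set: R]) (w^-1)%:E.

(* Main.v *)
Require Import Defs.
From HB Require Import structures.
From mathcomp Require Import all_boot all_order all_algebra.
From mathcomp Require Import all_classical all_reals all_analysis.
Import Order.TTheory GRing.Theory Num.Theory.
From mathcomp Require Import lra.
Import measurable_realfun.
Local Open Scope ring_scope.
Local Open Scope classical_set_scope.
Local Open Scope ereal_scope.

Lemma measurable_inv (R : realType) : measurable_fun [set: R] (@GRing.inv R).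
Proof.
rewrite (_ : GRing.inv = fun x : R => if x == 0%R then 0%R else (x^-1)%R); last first.
  by apply/funext => x; case: eqP => // ->; rewrite invr0.
apply: measurable_fun_if => //.
- apply: (measurable_fun_bool true).
  rewrite (_ : _ @^-1` _ = [set 0%R]) ?setTI//.
  by apply/seteqP; split => [_ /eqP ->//|_ -> /=]; rewrite eqxx.
- rewrite (_ : _ `&` _ = [set x : R | x != 0%R]); last first.
    by apply/seteqP; split => [x [_ /= ->]//|x /= /negbTE ->].
  apply: open_continuous_measurable_fun.
    by rewrite (_ : [set x : R | x != 0%R] = ~` [set 0%R]);
      [exact: closed_openC; exact: closed_eq|apply/seteqP; split => x /= /eqP].
  by move=> x; rewrite inE /= => x0; exact: inv_continuous.
Qed.

Lemma eq_lee (R : realType) (a b : \bar R) : a = b -> a <= b.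
Proof. by move->. Qed.

Lemma integral_le_pos {d} {T : measurableType d} {R : realType}
  (mu : {measure set T -> \bar R}) (f : T -> \bar R) :
  \int[mu]_(x in [set: T]) f x <= \int[mu]_(x in [set: T]) f^\+ x.
Proof.
rewrite integralE -[leRHS]sube0; apply: leeB => //.
by apply: integral_ge0 => x _; exact: funeneg_ge0.
Qed.

Lemma integral_pos_part (R : realType) (mu : {measure set R -> \bar R})
  (h : R -> R) : measurable_fun [set: R] h ->
  mu [set w : R | (w <= 0)%R] = 0 ->
  (forall w : R, (0 < w)%R -> (0 <= h w)%R) ->
  \int[mu]_(w in [set: R]) (h w)%:E = \int[mu]_(w in [set: R]) (Num.max (h w) 0%R)%:E.
Proof.
move=> mh mu0 h0.
have mN : measurable [set w : R | (w <= 0)%R].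
  by rewrite -set_itvNyc; exact: measurable_itv.
have mhn : measurable_fun [set: R] (fun w => (h w)%:E)^\-.
  by apply: measurable_funeneg; exact/measurable_EFinP.
rewrite integralE [X in _ - X](ge0_negligible_integral _ _ mhn _ mu0) //.
rewrite [X in _ - X]integral0_eq ?sube0; last first.
  move=> w [_ /= /negP]; rewrite -ltNge => w0.
  by rewrite funenegE -EFinN -EFin_max; congr EFin; apply/max_idPr; rewrite oppr_le0 h0.
by apply: eq_integral => w _; rewrite funeposE EFin_max.
Qed.

Theorem lemma3p5 (d : measure_display) (X : measurableType d) (R : realType)
  (ratio : X -> X -> R) (ratio_ge0 : forall x y : X, (0 <= ratio x y)%R)
  (Q : X -> nat -> probability R R)
  (Q_pos : forall (x : X) (N : nat), (0 < N)%N -> Q x N [set w : R | (w <= 0)%R] = 0)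
  (Q_mean : forall (x : X) (N : nat), (0 < N)%N ->
     \int[Q x N]_(w in [set: R]) w%:E = 1)
  (x y : X) (N : nat) (hN : (0 < N)%N) :
  pm_alpha ratio Q N x y <= (mh_alpha ratio x y)%:E * inv_moment Q N x.
Proof.
rewrite /pm_alpha /mh_alpha /inv_moment.
have r0 := ratio_ge0 x y.
set r := ratio x y.
have P1neg := Q_pos x N hN; have P2neg := Q_pos y N hN.
have mN : measurable [set w : R | (w <= 0)%R].
  by rewrite -set_itvNyc; exact: measurable_itv.
have minv := @measurable_inv R.
have mmax : measurable_fun [set: R] (fun w : R => Num.max w 0%R).
  by apply: measurable_maxr.
have mmaxinv : measurable_fun [set: R] (fun w : R => Num.max (w^-1)%R 0%R).
  by apply: measurable_maxr.
have Iinv : \int[Q x N]_(w in [set: R]) ((w^-1)%R)%:E =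
    \int[Q x N]_(w in [set: R]) (Num.max (w^-1)%R 0%R)%:E.
  apply: integral_pos_part => // w w0; by rewrite ltW // invr_gt0.
have I1 : \int[Q y N]_(w in [set: R]) (Num.max w 0%R)%:E = 1.
  rewrite -(@integral_pos_part _ _ (fun w => w)) ?Q_mean // => w /ltW //.
have mf : measurable_fun [set: R * R]
    (fun w : R * R => (Num.min 1 (r * w.2 / w.1))%:E).
  apply/measurable_EFinP; apply: measurable_minr => //.
  apply: measurable_funM; first by apply: measurable_funM => //; exact: measurable_snd.
  exact: (measurableT_comp minv measurable_fst).
have H := integral_le_pos (Q x N \x Q y N) (fun w : R * R => (Num.min 1 (r * w.2 / w.1))%:E). apply: (le_trans H).
have [r1|r1] := leP r 1%R.
- set g := fun w : R * R => (r * Num.max w.2 0 * Num.max (w.1^-1) 0)%:E.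
  have g0 : forall w, 0 <= g w.
    move=> w; rewrite lee_fin; apply: mulr_ge0; first apply: mulr_ge0 => //.
      by rewrite le_max lexx orbT.
    by rewrite le_max lexx orbT.
  have mg : measurable_fun [set: R * R] g.
    apply/measurable_EFinP; apply: measurable_funM.
      apply: measurable_funM => //.
      exact: (measurableT_comp mmax measurable_snd).
    exact: (measurableT_comp mmaxinv measurable_fst).
  apply: (@le_trans _ _ (\int[Q x N \x Q y N]_(w in [set: R * R]) g w)).
    apply: ae_ge0_le_integral => //.
    - exact: measurable_funepos.
    - exists (([set w : R | (w <= 0)%R] `*` [set: R]) `|` ([set: R] `*` [set w : R | (w <= 0)%R])).
      split.
      + by apply: measurableU; apply: measurableX.
      + apply/eqP; rewrite eq_le measure_ge0 andbT.
        apply: le_trans (measureU2 _ _ _) _; try by apply: measurableX.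
        have E1 : (Q x N \x Q y N) ([set w : R | (w <= 0)%R] `*` [set: R]) = 0.
          rewrite product_measure1E //.
          by rewrite [X in X * _](_ : _ = 0) ?mul0e //; exact: P1neg.
        have E2 : (Q x N \x Q y N) ([set: R] `*` [set w : R | (w <= 0)%R]) = 0.
          rewrite product_measure1E //.
          by rewrite [X in _ * X](_ : _ = 0) ?mule0 //; exact: P2neg.
        rewrite -[leRHS](adde0 0); apply: leeD; rewrite le_eqVlt; apply/orP; left; apply/eqP;
          [exact: E1|exact: E2].
      + move=> [a b] /= Hn.
        have [a0|a0] := leP a 0%R; first by left.
        have [b0|b0] := leP b 0%R; first by right.
        exfalso; apply: Hn => _.
        rewrite funeposE -EFin_max /g lee_fin /=.
        have ai : (0 < a^-1)%R by rewrite invr_gt0.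
        rewrite (max_idPl (ltW b0)) (max_idPl (ltW ai)).
        rewrite ge_max ge_min lexx orbT /=.
        exact: divr_ge0 (mulr_ge0 r0 (ltW b0)) (ltW a0).
  have E := @fubini_tonelli1 _ _ _ _ _ (Q x N) (Q y N) g mg g0.
  have E' : \int[Q x N \x Q y N]_(w in [set: R * R]) g w = _ := E.
  rewrite E' /fubini_F.
  rewrite (eq_integral (fun w : R => (r * Num.max (w^-1)%R 0%R)%:E)); last first.
    move=> w _; rewrite /g.
    rewrite (eq_integral (fun v : R => (r * Num.max (w^-1)%R 0%R)%:E * (Num.max v 0%R)%:E)); last first.
      by move=> v _ /=; rewrite -EFinM mulrAC.
    rewrite ge0_integralZl_EFin //; first by rewrite I1 mule1.
    + by move=> v _; rewrite lee_fin le_max lexx orbT.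
    + exact/measurable_EFinP.
    + by apply: mulr_ge0 => //; rewrite le_max lexx orbT.
  under eq_integral do rewrite EFinM.
  rewrite ge0_integralZl_EFin // ?Iinv //.
  + by move=> v _; rewrite lee_fin le_max lexx orbT.
  + exact/measurable_EFinP.
- rewrite mul1e Iinv.
  apply: (@le_trans _ _ 1).
    apply: (@le_trans _ _ (\int[Q x N \x Q y N]_(w in [set: R * R]) (cst 1 w))).
      apply: ge0_le_integral => //.
      + exact: measurable_funepos.
      + move=> w _; rewrite funeposE -EFin_max lee_fin ge_max ge_min lexx /=.
        by rewrite ler01.
    rewrite integral_cst // mul1e.
    rewrite le_eqVlt; apply/orP; left; apply/eqP.
    have E3 := @product_measure1E _ _ _ _ _ (Q x N) (Q y N) [set: R] [set: R] measurableT measurableT.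
    rewrite [X in _ = X * _](_ : _ = 1) ?mul1e in E3; last exact: probability_setT.
    rewrite [X in _ = X](_ : _ = 1) in E3; last exact: probability_setT.
    rewrite setXTT in E3; exact: E3.
  have I1x : \int[Q x N]_(w in [set: R]) (Num.max w 0%R)%:E = 1.
    rewrite -(@integral_pos_part _ _ (fun w => w)) ?Q_mean // => w /ltW //.
  have I0 : 0 <= \int[Q x N]_(w in [set: R]) (Num.max (w^-1)%R 0%R)%:E.
    by apply: integral_ge0 => w _; rewrite lee_fin le_max lexx orbT.
  have H2 : 2%:E <= \int[Q x N]_(w in [set: R]) (Num.max (w^-1)%R 0%R)%:E + 1.
    rewrite -[X in _ + X]I1x -ge0_integralD //; last 4 first.
    + by move=> w _; rewrite lee_fin le_max lexx orbT.
    + exact/measurable_EFinP.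
    + by move=> w _; rewrite lee_fin le_max lexx orbT.
    + exact/measurable_EFinP.
    apply: (@le_trans _ _ (\int[Q x N]_(w in [set: R]) (cst 2%:E w))).
      rewrite integral_cst // le_eqVlt; apply/orP; left; apply/eqP.
      rewrite [X in _ * X](_ : _ = 1) ?mule1 //; exact: probability_setT.
    apply: ae_ge0_le_integral => //.
    + by move=> w _; rewrite lee_fin.
    + by move=> w _; rewrite -EFinD lee_fin addr_ge0 // le_max lexx orbT.
    + by apply: emeasurable_funD; exact/measurable_EFinP.
    + exists [set w : R | (w <= 0)%R]; split => //.
      move=> w /= Hn; apply: contrapT => /negP; rewrite -ltNge => w0.
      apply: Hn => _.
      have wi : (0 < w^-1)%R by rewrite invr_gt0.
      rewrite -EFinD lee_fin (max_idPl (ltW wi)) (max_idPl (ltW w0)).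
      rewrite -(ler_pM2r w0) !mulrDl mulVf ?gt_eqF // !mul1r.
      have := sqr_ge0 (w - 1)%R; nra.
  move: I0 H2; case: (\int[Q x N]_(w in [set: R]) (Num.max (w^-1)%R 0%R)%:E) => [s| |] //.
  move=> _; change ((2%R)%:E <= (s + 1)%R%:E -> (1%R)%:E <= s%:E).
  by rewrite !lee_fin; lra.
by move=> _ _; rewrite leey.
Qed.
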